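(* Let $G$ be a graph on $n$ vertices that has at least two independent (vertex-disjoint) edges. Then $D_{n-1}(G)$ is connected.
   Context: All graphs are finite and simple. A set $S \subseteq V(G)$ is a dominating set of $G$ if every vertex of $V(G)\setminus S$ is adjacent to a vertex of $S$. $\gamma(G)$ is the minimum cardinality of a dominating set of $G$. For an integer $k \ge \gamma(G)$, the $k$-dominating graph $D_k(G)$ is the graph whose vertices are the dominating sets of $G$ of cardinality at most $k$, with two such sets $A,B$ adjacent if and only if their symmetric difference $(A\setminus B)\cup(B\setminus A)$ consists of exactly one vertex of $G$. *)

(* Defs.v *)
From mathcomp Require Import all_boot.
Set Implicit Arguments. Unset Strict Implicit. Unset Printing Implicit Defensive.

Definition simple_graph (T : finType) (e : rel T) : Prop :=
  symmetric e /\ irreflexive e.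

Definition dominating (T : finType) (e : rel T) (S : {set T}) : bool :=
  [forall v, (v \notin S) ==> [exists u in S, e v u]].

Definition Dk_vertex (T : finType) (e : rel T) (k : nat) (S : {set T}) : bool :=
  dominating e S && (#|S| <= k).

Definition Dk_adj (T : finType) (A B : {set T}) : bool :=
  #|(A :\: B) :|: (B :\: A)| == 1.

Definition Dk_connected (T : finType) (e : rel T) (k : nat) : Prop :=
  forall A B : {set T}, Dk_vertex e k A -> Dk_vertex e k B ->
    exists p : seq {set T},
      [/\ all (Dk_vertex e k) p, path (@Dk_adj T) A p & last A p = B].

Definition has_two_independent_edges (T : finType) (e : rel T) : Prop :=
  exists a b c d : T, [/\ e a b, e c d & uniq [:: a; b; c; d]].

(* Main.v *)
Require Import Defs.
From mathcomp Require Import all_boot.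
Set Implicit Arguments. Unset Strict Implicit. Unset Printing Implicit Defensive.

Section S.
Variables (T : finType) (e : rel T) (k : nat).

Definition rr (A B : {set T}) : bool :=
  [&& Dk_vertex e k A, Dk_vertex e k B & Dk_adj A B].

Lemma rr_sym : symmetric rr.
Proof.
move=> A B; rewrite /rr /Dk_adj setUC.
by case: (Dk_vertex e k A); case: (Dk_vertex e k B).
Qed.

Lemma dom_sup (S X : {set T}) : dominating e S -> S \subset X -> dominating e X.
Proof.
move=> /forallP hS sSX; apply/forallP => v; apply/implyP => vX.
have vS : v \notin S by apply: contra vX; apply: (subsetP sSX).
have /existsP [u /andP [uS evu]] := implyP (hS v) vS.
by apply/existsP; exists u; rewrite evu (subsetP sSX).
Qed.

Lemma grow_n n (S X : {set T}) : #|X| - #|S| = n ->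
  dominating e S -> S \subset X -> #|X| <= k -> connect rr S X.
Proof.
elim: n S => [|n IH] S hn dS sSX hX.
  have hle := subset_leq_card sSX.
  have -> : S = X by apply/eqP; rewrite eqEcard sSX; apply/leP; move/eqP: hn; rewrite subn_eq0 => /leP.
  exact: connect0.
have [x xX xS] : exists2 x, x \in X & x \notin S.
  case: (pickP [pred y | (y \in X) && (y \notin S)]) => [y /andP [h1 h2]|H].
    by exists y.
  have : X \subset S by apply/subsetP => y yX; move: (H y); rewrite /= yX /=; by case: (y \in S).
  by move/subset_leq_card; rewrite -subn_eq0 hn.
have sSX' : x |: S \subset X by rewrite subUset sub1set xX.
have dS' : dominating e (x |: S) by apply: dom_sup dS (subsetUr _ _).
apply: (connect_trans (y := x |: S)); last first.
  apply: IH => //; move: hn; rewrite cardsU1 xS /= add1n subnS => ->; by [].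
apply: connect1; rewrite /rr /Dk_vertex dS dS' /=.
rewrite (leq_trans (subset_leq_card sSX') hX) (leq_trans (subset_leq_card sSX) hX) /=.
rewrite /Dk_adj.
have -> : S :\: (x |: S) :|: (x |: S) :\: S = [set x].
  apply/setP => w; rewrite !inE.
  by case: (eqVneq w x) => [->|]; rewrite ?xS //=; case: (w \in S).
by rewrite cards1.
Qed.

Lemma grow (S X : {set T}) :
  dominating e S -> S \subset X -> #|X| <= k -> connect rr S X.
Proof. exact: grow_n. Qed.

End S.

Theorem lemma2 (T : finType) (e : rel T) :
  simple_graph e -> has_two_independent_edges e ->
  Dk_connected e (#|T| - 1).
Proof.
move=> [esym eirr] [a [b [c [d [eab ecd]]]]].
rewrite /= !inE !negb_or => /and4P [/and3P [nab nac nad] /andP [nbc nbd] ncd _].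
set k := #|T| - 1.
have cardn (x : T) : #|[set~ x]| <= k by rewrite cardsC1 /k subn1.
have nb (x y : T) : e x y -> x != y.
  by move=> hxy; apply: contraTneq hxy => ->; rewrite eirr.
have pair (x y x' y' : T) : x != y -> e x x' -> x' != y -> e y y' -> y' != x ->
    connect (rr e k) [set~ x] [set~ y].
  move=> nxy exx' nx'y eyy' ny'x.
  set Z := [set~ x] :\ y.
  have dZ : dominating e Z.
    apply/forallP => w; apply/implyP; rewrite !inE negb_and !negbK.
    case/orP => /eqP ->; apply/existsP.
      by exists y'; rewrite /Z !inE ny'x eq_sym (nb _ _ eyy').
    by exists x'; rewrite /Z !inE nx'y eq_sym (nb _ _ exx').
  have h1 : connect (rr e k) Z [set~ x] by apply: grow dZ _ (cardn x); apply: subsetDl.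
  have h2 : connect (rr e k) Z [set~ y].
    apply: grow dZ _ (cardn y); apply/subsetP => w; rewrite !inE; by case/andP.
  apply: connect_trans h2; by rewrite sym_connect_sym //; apply: rr_sym.
have symc := sym_connect_sym (@rr_sym T e k).
set H := [set~ a].
have hub : forall S, Dk_vertex e k S -> connect (rr e k) S H.
  move=> S /andP [dS cS].
  have [v vS] : exists v, v \notin S.
    apply/existsP; apply: contraTT cS => /existsPn hn.
    have -> : S = setT by apply/setP => w; move: (hn w); rewrite negbK inE.
    have hpos : 0 < #|T| by apply/card_gt0P; exists a.
    by rewrite cardsT /k -ltnNge ltn_subrL hpos.
  have /existsP [u /andP [uS evu]] := implyP (forallP dS v) vS.
  have s1 : connect (rr e k) S [set~ v].
    apply: grow dS _ (cardn v); apply/subsetP => w wS; rewrite !inE.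
    by apply: contraNneq vS => <-.
  apply: connect_trans s1 _.
  have ca : connect (rr e k) [set~ c] H.
    by apply: (pair c a d b) => //; rewrite eq_sym.
  case: (eqVneq v a) => [->|nva]; first exact: connect0.
  have [[w evw nwa]|hno] : (exists2 w, e v w & w != a) \/ (forall w, e v w -> w = a).
    case: (pickP (fun w => e v w && (w != a))) => [w /andP [h1 h2]|hp].
      by left; exists w.
    right => w evw; move: (hp w); rewrite evw /=; by case: eqP.
  - case: (eqVneq v b) => [evb|nvb].
      subst v; apply: connect_trans (pair b c a d _ _ _ _ _) ca => //;
        (try by rewrite esym); by rewrite eq_sym.
    by apply: (pair v a w b) => //; (try by rewrite esym); rewrite eq_sym.
  - have eva : e v a by rewrite -(hno u evu).
    have nvc : v != c.
      apply/eqP => ev; have := hno d; rewrite ev ecd => /(_ isT) hd.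
      by move: nad; rewrite hd eqxx.
    have nvd : v != d.
      apply/eqP => ev; have := hno c; rewrite ev esym ecd => /(_ isT) hd.
      by move: nac; rewrite hd eqxx.
    apply: connect_trans (pair v c a d _ _ _ _ _) ca => //;
      (try by rewrite esym); by rewrite eq_sym.
move=> A B hA hB.
have : connect (rr e k) A B by apply: connect_trans (hub A hA) _; rewrite symc; exact: hub.
case/connectP => p pth ->; exists p; split => //.
- elim: p A hA pth {hB} => //= x p IH A hA /andP [/and3P [_ hx _] hp].
  by rewrite hx (IH x).
- by apply: sub_path pth => x y /and3P [].
Qed.
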